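(* Let $d\ge 1$, let $\mathbf C_1,\mathbf C_2$ be real symmetric strictly positive-definite $d\times d$ matrices, let $\lambda_1,\lambda_2\in[0,1]$ with $\lambda_1+\lambda_2=1$, and set $\mathbf C=\lambda_1\mathbf C_1+\lambda_2\mathbf C_2$. For $\mathbf t\in\mathbb R^d$ define $$F^{(1)}(\mathbf t)=\sum_{a=1,2}\lambda_a\exp\Big(\tfrac12\mathbf t^{\rm T}\mathbf C_a\mathbf t\Big)-\exp\Big(\tfrac12\mathbf t^{\rm T}\mathbf C\mathbf t\Big),$$ $$F^{(2)}(\mathbf t)=F^{(1)}(\mathbf t)\,\log\big[(2\pi)^d\det\mathbf C\big]+\sum_{a=1,2}\lambda_a\exp\Big(\tfrac12\mathbf t^{\rm T}\mathbf C_a\mathbf t\Big)\,\mathrm{tr}\big(\mathbf C^{-1}\mathbf C_a\big)-d\exp\Big(\tfrac12\mathbf t^{\rm T}\mathbf C\mathbf t\Big),$$ and $\mathbb S=\{\mathbf t\in\mathbb R^d:\ F^{(1)}(\mathbf t)\ge 0\ \text{and}\ F^{(2)}(\mathbf t)\le 0\}$. If $\mathbf t\in\mathbb S$, then $$h(f^{\rm No}_{\mathbf C})\exp\Big(\tfrac12\mathbf t^{\rm T}\mathbf C\mathbf t\Big)-\lambda_1h(f^{\rm No}_{\mathbf C_1})\exp\Big(\tfrac12\mathbf t^{\rm T}\mathbf C_1\mathbf t\Big)-\lambda_2h(f^{\rm No}_{\mathbf C_2})\exp\Big(\tfrac12\mathbf t^{\rm T}\mathbf C_2\mathbf t\Big)\ge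 0,$$ i.e. $$\log\big[(2\pi e)^d\det\mathbf C\big]\exp\Big(\tfrac12\mathbf t^{\rm T}\mathbf C\mathbf t\Big)-\sum_{a=1,2}\lambda_a\log\big[(2\pi e)^d\det\mathbf C_a\big]\exp\Big(\tfrac12\mathbf t^{\rm T}\mathbf C_a\mathbf t\Big)\ge 0,$$ with equality if and only if $\lambda_1\lambda_2=0$ or $\mathbf C_1=\mathbf C_2$.
   Context: $\log$ denotes the natural logarithm. For a strictly positive-definite $d\times d$ matrix $\mathbf C$, $f^{\rm No}_{\mathbf C}(\mathbf x)=(2\pi)^{-d/2}(\det\mathbf C)^{-1/2}\exp(-\tfrac12\mathbf x^{\rm T}\mathbf C^{-1}\mathbf x)$ is the density of the centered normal distribution $\mathrm N(\mathbf 0,\mathbf C)$ on $\mathbb R^d$, and $h(f)=-\int_{\mathbb R^d}f\log f\,d\mathbf x$ is the Shannon differential entropy, so that $h(f^{\rm No}_{\mathbf C})=\tfrac12\log\big[(2\pi e)^d\det\mathbf C\big]$. The left-hand side equals $\sigma_{\mathbf t}(\mathbf C)-\lambda_1\sigma_{\mathbf t}(\mathbf C_1)-\lambda_2\sigma_{\mathbf t}(\mathbf C_2)$ where $\sigma_{\mathbf t}(\mathbf C)=-\int_{\mathbb R^d}e^{\mathbf t^{\rm T}\mathbf x}f^{\rm No}_{\mathbf C}(\mathbf x)\log f^{\rm No}_{\mathbf C}(\mathbf x)\,d\mathbf x$ is the weighted differential entropy with exponential weight function $\phi(\mathbf x)=e^{\mathbf t^{\rm T}\mathbf x}$. *)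

(* Defs.v *)
From HB Require Import structures.
From Stdlib Require Import Reals Lra ClassicalEpsilon FunctionalExtensionality.
From mathcomp Require Import all_boot all_order all_algebra.

Set Implicit Arguments.
Unset Strict Implicit.
Unset Printing Implicit Defensive.

Definition R_eqb (x y : R) : bool := if Req_EM_T x y then true else false.
Lemma R_eqP : Equality.axiom R_eqb.
Proof. by move=> x y; rewrite /R_eqb; case: Req_EM_T => H; constructor. Qed.

HB.instance Definition _ := hasDecEq.Build R R_eqP.

Definition R_find (P : pred R) (n : nat) : option R :=
  match excluded_middle_informative (exists x, P x) with
  | left H => Some (proj1_sig (constructive_indefinite_description _ H))
  | right _ => None
  end.

Lemma R_find_correct P n x : R_find P n = Some x -> P x.
Proof.
rewrite /R_find; case: excluded_middle_informative => // H [<-].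
exact: proj2_sig (constructive_indefinite_description _ H).
Qed.

Lemma R_find_complete (P : pred R) : (exists x, P x) -> exists n, R_find P n.
Proof. by move=> H; exists 0%N; rewrite /R_find; case: excluded_middle_informative. Qed.

Lemma R_find_ext (P Q : pred R) : P =1 Q -> R_find P =1 R_find Q.
Proof. by move=> /functional_extensionality ->. Qed.

HB.instance Definition _ := hasChoice.Build R R_find_correct R_find_complete R_find_ext.

Lemma R_addA : forall x y z : R, Rplus x (Rplus y z) = Rplus (Rplus x y) z. Proof. move=> *; lra. Qed.
Lemma R_addC : forall x y : R, Rplus x y = Rplus y x. Proof. move=> *; lra. Qed.
Lemma R_add0 : forall x : R, Rplus R0 x = x. Proof. move=> *; lra. Qed.
Lemma R_addN : forall x : R, Rplus (Ropp x) x = R0. Proof. move=> *; lra. Qed.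

HB.instance Definition _ := GRing.isZmodule.Build R R_addA R_addC R_add0 R_addN.

Lemma R_mulA : forall x y z : R, Rmult x (Rmult y z) = Rmult (Rmult x y) z. Proof. move=> *; ring. Qed.
Lemma R_mulC : forall x y : R, Rmult x y = Rmult y x. Proof. move=> *; ring. Qed.
Lemma R_mul1 : forall x : R, Rmult R1 x = x. Proof. move=> *; ring. Qed.
Lemma R_mulDl : forall x y z : R, Rmult (Rplus x y) z = Rplus (Rmult x z) (Rmult y z). Proof. move=> *; ring. Qed.
Lemma R_one_neq0 : (R1 != R0 :> R).
Proof. by apply/eqP; apply R1_neq_R0. Qed.

HB.instance Definition _ :=
  GRing.Zmodule_isComNzRing.Build R R_mulA R_mulC R_mul1 R_mulDl R_one_neq0.

Lemma R_mulV (x : R) : x != R0 -> (Rinv x * x)%R = R1.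
Proof. by move/eqP=> H; apply: Rinv_l. Qed.

HB.instance Definition _ := GRing.ComNzRing_isField.Build R R_mulV Rinv_0.

Local Open Scope ring_scope.

Definition sym_posdef (d : nat) (A : 'M[R]_d) : Prop :=
  A^T = A /\
  forall x : 'cV[R]_d, x != 0 -> Rlt 0%R ((x^T *m A *m x) ord0 ord0).

Definition qform (d : nat) (A : 'M[R]_d) (t : 'cV[R]_d) : R := (t^T *m A *m t) ord0 ord0.

Local Close Scope ring_scope.
Local Open Scope R_scope.

(* Shannon differential entropy of N(0,C) in its closed form
   h(f^No_C) = 1/2 log[(2 pi e)^d det C]  (as given in the paper's context) *)
Definition hNo (d : nat) (C : 'M[R]_d) : R :=
  / 2 * ln ((2 * PI * exp 1) ^ d * (\det C)%R).

Definition F1 (d : nat) (l1 l2 : R) (C1 C2 : 'M[R]_d) (t : 'cV[R]_d) : R :=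
  let C := (l1 *: C1 + l2 *: C2)%R in
  l1 * exp (/ 2 * qform C1 t) + l2 * exp (/ 2 * qform C2 t) - exp (/ 2 * qform C t).

Definition F2 (d : nat) (l1 l2 : R) (C1 C2 : 'M[R]_d) (t : 'cV[R]_d) : R :=
  let C := (l1 *: C1 + l2 *: C2)%R in
  F1 l1 l2 C1 C2 t * ln ((2 * PI) ^ d * (\det C)%R)
  + (l1 * exp (/ 2 * qform C1 t) * (\tr (invmx C *m C1))%R
     + l2 * exp (/ 2 * qform C2 t) * (\tr (invmx C *m C2))%R)
  - INR d * exp (/ 2 * qform C t).

Definition setS (d : nat) (l1 l2 : R) (C1 C2 : 'M[R]_d) : 'cV[R]_d -> Prop :=
  fun t => 0 <= F1 l1 l2 C1 C2 t /\ F2 l1 l2 C1 C2 t <= 0.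

(* Main.v *)
Require Import Defs.
From HB Require Import structures.
From Stdlib Require Import Reals Lra.
From mathcomp Require Import all_boot all_order all_algebra.
Import GRing.Theory.
Local Open Scope ring_scope.

Lemma congr_pd n (M Q : 'M[R]_n) : sym_posdef M -> Q \in unitmx ->
  sym_posdef (Q *m M *m Q^T)%R.
Proof.
move=> [Ms Mp] uQ; split.
  by rewrite !trmx_mul trmxK Ms mulmxA.
move=> x x0.
have -> : (x^T *m (Q *m M *m Q^T) *m x = (Q^T *m x)^T *m M *m (Q^T *m x))%R.
  by rewrite trmx_mul trmxK !mulmxA.
apply: Mp; apply: contra x0 => /eqP H.
have uQt : Q^T \in unitmx by rewrite unitmx_tr.
by rewrite -(mulKmx uQt x) H mulmx0.
Qed.

Lemma quad_blk n (a : R) (S : 'M_n) (u : 'cV_1) (y : 'cV_n) :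
  (col_mx u y)^T *m block_mx (a%:M : 'M_1) 0 0 S *m col_mx u y
  = u^T *m a%:M *m u + y^T *m S *m y.
Proof.
rewrite tr_col_mx mul_row_block mul_row_col !mulmx0 !addr0 !add0r.
by [].
Qed.

Lemma blk_pd n (a : R) (S : 'M_n) :
  sym_posdef (block_mx (a%:M : 'M_1) 0 0 S) -> Rlt 0 a /\ sym_posdef S.
Proof.
move=> [Hs Hp]; split.
  have := Hp (col_mx 1%:M 0).
  rewrite quad_blk trmx0 !mul0mx addr0 trmx1 mul1mx mulmx1 mxE eqxx mulr1n.
  apply; apply/eqP => /(congr1 (fun M : 'M[R]_(1+n,1) => M (lshift n 0) 0)).
  rewrite col_mxEu !mxE /= => /eqP; rewrite oner_eq0 //.
split.
  move: Hs; rewrite tr_block_mx => /eq_block_mx [_ _ _ ->] //.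
move=> y y0.
have := Hp (col_mx 0 y).
rewrite quad_blk trmx0 mul0mx mul0mx add0r; apply.
apply: contra y0 => /eqP H; apply/eqP.
by have := congr1 dsubmx H; rewrite col_mxKd linear0.
Qed.

Lemma RaddE (x y : R) : x + y = Rplus x y. Proof. by []. Qed.
Lemma RmulE (x y : R) : x * y = Rmult x y. Proof. by []. Qed.
Lemma RoppE (x : R) : - x = Ropp x. Proof. by []. Qed.
Lemma RsubE (x y : R) : x - y = Rminus x y. Proof. by []. Qed.
Lemma RinvE (x : R) : x^-1 = Rinv x. Proof. by []. Qed.
Lemma R0E : (0 : R) = R0. Proof. by []. Qed.
Lemma R1E : (1 : R) = R1. Proof. by []. Qed.
Lemma natRE n : (n%:R : R) = INR n.
Proof.
elim: n => [//|n IH]; rewrite -addn1 natrD IH plus_INR.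
by [].
Qed.

Lemma sum_ge0 n (f : 'I_n -> R) : (forall i, Rle 0 (f i)) -> Rle 0 (\sum_i f i).
Proof.
move=> H; apply: (big_ind (fun x => Rle 0 x)) => //.
  exact: Rle_refl.
by move=> x y; rewrite RaddE; lra.
Qed.

Lemma sum_eq0 n (f : 'I_n -> R) : (forall i, Rle 0 (f i)) -> \sum_i f i = 0 ->
  forall i, f i = 0.
Proof.
move=> H Hs i; move: Hs; rewrite (bigD1 i) //= => Hs.
have : Rle 0 (\sum_(j | j != i) f j).
  apply: (big_ind (fun x => Rle 0 x)) => //; first exact: Rle_refl.
  by move=> x y; rewrite RaddE; lra.
move=> Hsum; exact: (Rplus_eq_0_l _ _ (H i) Hsum Hs).
Qed.

Lemma trsq_ge0 n (v : 'cV[R]_n) : Rle 0 (\tr (v *m v^T)).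
Proof.
apply: sum_ge0 => i; rewrite mxE big_ord1 !mxE RmulE.
exact: Rle_0_sqr.
Qed.

Lemma trsq_eq0 n (v : 'cV[R]_n) : \tr (v *m v^T) = 0 -> v = 0.
Proof.
move=> H; apply/matrixP => i j; rewrite (ord1 j) mxE.
have := @sum_eq0 _ (fun i => v i 0 * v i 0) (fun i => Rle_0_sqr (v i 0)) _ i.
rewrite /Rsqr => H2; apply: Rsqr_0_uniq; apply: H2.
apply: (etrans _ H); apply: eq_bigr => k _; by rewrite mxE big_ord1 !mxE.
Qed.

Lemma ln_le_sub1 (a : R) : Rlt 0 a -> Rle (ln a) (Rminus a 1).
Proof. move=> Ha; have := exp_ineq1_le (ln a); rewrite exp_ln //; lra. Qed.

Lemma ln_eq_sub1 (a : R) : Rlt 0 a -> ln a = Rminus a 1 -> a = R1.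
Proof.
move=> Ha H; case: (Req_dec (ln a) 0) => H0.
  by move: H; rewrite H0; lra.
have := exp_ineq1 _ H0; rewrite exp_ln //; lra.
Qed.

Lemma det_L n (w : 'cV[R]_n) : \det (block_mx (1%:M : 'M_1) 0 w 1%:M) = 1.
Proof. by rewrite det_lblock !det1 mul1r. Qed.

Section Step.
Variables (n : nat) (M : 'M[R]_(1 + n)).
Hypothesis HM : sym_posdef M.
Let a := (ulsubmx M) 0 0.
Let u := ursubmx M.
Let v := dlsubmx M.
Let D := drsubmx M.

Lemma hM : M = block_mx (a%:M : 'M_1) u v D.
Proof. by rewrite /a -mx11_scalar submxK. Qed.

Lemma huv : u = v^T.
Proof.
have := proj1 HM; rewrite hM tr_block_mx => /eq_block_mx [_ H _ _].
by rewrite H.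
Qed.

Lemma hDs : D^T = D.
Proof.
by have := proj1 HM; rewrite hM tr_block_mx => /eq_block_mx [_ _ _ H].
Qed.

Lemma ha : Rlt 0 a.
Proof.
have := proj2 HM (col_mx 1%:M 0).
rewrite hM tr_col_mx mul_row_block mul_row_col trmx0 trmx1 !mul0mx !mulmx0 !addr0 !mul1mx.
rewrite mulmx1 mxE eqxx mulr1n.
apply; apply/eqP => /(congr1 (fun M : 'M[R]_(1+n,1) => M (lshift n 0) 0)).
rewrite col_mxEu !mxE /= => /eqP; rewrite oner_eq0 //.
Qed.

Let S := D - a^-1 *: (v *m u).
Let L := block_mx (1%:M : 'M_1) 0 (a^-1 *: v) (1%:M : 'M_n).
Let Blk := block_mx (a%:M : 'M_1) 0 0 S.

Lemma ha0 : a != 0.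
Proof. by apply/eqP => H; have := ha; rewrite H; apply: Rlt_irrefl. Qed.

Lemma hfac : M = L *m Blk *m L^T.
Proof.
rewrite /L /Blk tr_block_mx !trmx1 !trmx0 !mulmx_block.
rewrite !mulmx0 !mul0mx !mulmx1 !mul1mx !addr0 !add0r.
rewrite mul_mx_scalar mul_scalar_mx linearZ /= !scalerA mulfV ?ha0 // !scale1r.
rewrite -huv -scalemxAr /S addrC subrK.
exact: hM.
Qed.
Let Linv := block_mx (1%:M : 'M_1) 0 (- (a^-1 *: v)) (1%:M : 'M_n).

Lemma hLinvL : Linv *m L = 1%:M.
Proof.
rewrite /Linv /L mulmx_block !mulmx0 !mul0mx !mulmx1 !mul1mx !addr0 !add0r addNr.
by rewrite -scalar_mx_block.
Qed.

Lemma hBlk : Blk = Linv *m M *m Linv^T.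
Proof.
rewrite [in RHS]hfac !mulmxA hLinvL mul1mx -mulmxA -trmx_mul hLinvL trmx1 mulmx1.
by [].
Qed.

Lemma hBpd : sym_posdef Blk.
Proof.
rewrite hBlk; apply: congr_pd => //.
by rewrite unitmxE /Linv det_L unitr1.
Qed.

Lemma hSpd : sym_posdef S.
Proof. exact: (proj2 (@blk_pd _ _ _ hBpd)). Qed.

Lemma hdet : \det M = a * \det S.
Proof.
rewrite {1}hfac !det_mulmx det_tr /L det_L /Blk det_ublock det_scalar1.
by rewrite mul1r mulr1.
Qed.

Lemma htr : \tr M = a + (\tr S + a^-1 * \tr (v *m v^T)).
Proof.
rewrite {1}hM mxtrace_block trace_mx11 mxE eqxx mulr1n; congr (_ + _).
have -> : D = S + a^-1 *: (v *m u) by rewrite /S subrK.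
by rewrite mxtraceD mxtraceZ huv.
Qed.

Lemma hEq : a = 1 -> S = 1%:M -> v = 0 -> M = 1%:M.
Proof.
move=> Ha1 HS1 Hv.
have HD : D = S + a^-1 *: (v *m u) by rewrite /S subrK.
rewrite Hv mul0mx scaler0 addr0 HS1 in HD.
by rewrite hM huv HD Hv trmx0 Ha1 -scalar_mx_block.
Qed.

Lemma hP (P' : 'M_n) : P' \in unitmx -> S = P' *m P'^T ->
  exists P : 'M_(1 + n), P \in unitmx /\ M = P *m P^T.
Proof.
move=> uP' SP'.
pose B := block_mx ((sqrt a)%:M : 'M_1) 0 0 P'.
have HB : B *m B^T = Blk.
  rewrite /B tr_block_mx trmx0 tr_scalar_mx mulmx_block.
  rewrite !mulmx0 !mul0mx !addr0 !add0r -scalar_mxM RmulE sqrt_sqrt.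
    by rewrite trmx0 mulmx0 -SP'.
  apply: Rlt_le; exact: ha.
exists (L *m B); split.
  rewrite unitmx_mul; apply/andP; split.
    by rewrite unitmxE /L det_L unitr1.
  rewrite unitmxE /B det_ublock det_scalar1 unitfE mulf_neq0 //.
    apply/eqP => H; have := sqrt_lt_R0 _ ha; rewrite H; apply: Rlt_irrefl.
by rewrite trmx_mul !mulmxA -(mulmxA L) HB -hfac.
Qed.

End Step.

Theorem key n (M : 'M[R]_n) : sym_posdef M ->
  [/\ Rlt 0 (\det M), Rle (ln (\det M)) (Rminus (\tr M) (INR n)),
      (ln (\det M) = Rminus (\tr M) (INR n) -> M = 1%:M) &
      exists P : 'M_n, P \in unitmx /\ M = P *m P^T].
Proof.
elim: n M => [|n IH] M HM.
  have -> : M = 1%:M by apply/matrixP => [[]].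
  rewrite det1 mxtrace1 natRE ln_1 /=; split.
  - exact: Rlt_0_1.
  - change (Rle 0 (Rminus 0 0)); lra.
  - by [].
  - by exists 1%:M; rewrite unitmx1 trmx1 mulmx1.
have HM' : @sym_posdef (1 + n) M := HM.
have Ha := ha n M HM'.
have HS := hSpd n M HM'.
have [dS lnS eqS [P' [uP' SP']]] := IH _ HS.
have Hw := trsq_ge0 n (dlsubmx (M : 'M_(1 + n))).
have Hia : Rlt 0 (Rinv (ulsubmx (M : 'M_(1 + n)) 0 0)) by apply: Rinv_0_lt_compat.
have Hla := @ln_le_sub1 _ Ha.
rewrite (hdet n M HM') (htr n M HM') !RmulE !RaddE S_INR ln_mult //.
move: Ha Hw Hia Hla dS lnS eqS SP'.
set a := ulsubmx (M : 'M_(1 + n)) 0 0.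
set S := drsubmx (M : 'M_(1 + n)) - _.
set w := \tr _.
move=> Ha Hw Hia Hla dS lnS eqS SP'.
rewrite ?RinvE ?RmulE ?RaddE.
have Haw : Rle 0 (Rmult (Rinv a) w) by apply: Rmult_le_pos => //; apply: Rlt_le.
split.
- exact: Rmult_lt_0_compat.
- lra.
- move=> Heq.
  have E1 : ln a = Rminus a 1 by lra.
  have E2 : ln (\det S) = Rminus (\tr S) (INR n) by lra.
  have E3 : Rmult (Rinv a) w = R0 by lra.
  apply: (hEq n M HM').
  + exact: ln_eq_sub1.
  + exact: eqS.
  + apply: trsq_eq0; case: (Rmult_integral _ _ E3) => // H.
    by have := Hia; rewrite H => /Rlt_irrefl.
- exact: (hP n M HM' P' uP' SP').
Qed.

Theorem pairKL n (A B : 'M[R]_n) : sym_posdef A -> sym_posdef B ->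
  [/\ Rlt 0 (\det A), Rlt 0 (\det B),
   Rle (Rminus (ln (\det B)) (ln (\det A))) (Rminus (\tr (invmx A *m B)) (INR n)) &
   (Rminus (ln (\det B)) (ln (\det A)) = Rminus (\tr (invmx A *m B)) (INR n) -> A = B)].
Proof.
move=> HA HB.
have [dA _ _ [P [uP hA]]] := key _ _ HA.
have [dB _ _ _] := key _ _ HB.
pose Q := invmx P.
have uQ : Q \in unitmx by rewrite unitmx_inv.
have HMpd := congr_pd _ _ _ HB uQ.
have [_ lnM eqM _] := key _ _ HMpd.
have QP : Q *m P = 1%:M by rewrite mulVmx.
have PQ : P *m Q = 1%:M by rewrite mulmxV.
have hinvA : invmx A = Q^T *m Q.
  have AX : A *m (Q^T *m Q) = 1%:M.
    by rewrite hA -mulmxA (mulmxA P^T) -trmx_mul QP trmx1 mul1mx PQ.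
  have uA : A \in unitmx by rewrite unitmxE unitfE; apply/eqP => H; move: dA; rewrite H; apply: Rlt_irrefl.
  by rewrite -[invmx A]mulmx1 -AX mulmxA mulVmx // mul1mx.
have htr : \tr (invmx A *m B) = \tr (Q *m B *m Q^T).
  by rewrite hinvA -mulmxA mxtrace_mulC.
have hdA : \det A = \det P * \det P by rewrite hA det_mulmx det_tr.
have hdM : \det (Q *m B *m Q^T) = \det B / (\det P * \det P).
  rewrite !det_mulmx det_tr det_inv invfM.
  by rewrite mulrA (mulrC (\det P)^-1).
have hln : ln (\det (Q *m B *m Q^T)) = Rminus (ln (\det B)) (ln (\det A)).
  rewrite hdM -hdA.
  change (ln (Rmult (\det B) (Rinv (\det A))) = Rminus (ln (\det B)) (ln (\det A))).
  rewrite ln_mult //; last exact: Rinv_0_lt_compat.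
  rewrite ln_Rinv //.
rewrite htr -hln; split => // Heq.
have := eqM Heq => HQ.
rewrite hA.
have -> : B = P *m (Q *m B *m Q^T) *m P^T.
  by rewrite !mulmxA PQ mul1mx -mulmxA -trmx_mul PQ trmx1 mulmx1.
by rewrite HQ mulmx1.
Qed.

Lemma comb_pd d (C1 C2 : 'M[R]_d) (l1 l2 : R) :
  sym_posdef C1 -> sym_posdef C2 -> Rle 0 l1 -> Rle 0 l2 -> Rplus l1 l2 = R1 ->
  sym_posdef (l1 *: C1 + l2 *: C2).
Proof.
move=> [s1 p1] [s2 p2] h1 h2 hl; split.
  by rewrite linearD !linearZ /= s1 s2.
move=> x x0.
rewrite mulmxDr mulmxDl -!scalemxAr -!scalemxAl.
have q1 := p1 x x0; have q2 := p2 x x0.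
move: q1 q2; set A := (x^T *m C1 *m x); set B := (x^T *m C2 *m x) => q1 q2.
rewrite [X in Rlt _ X]mxE.
rewrite [(l1 *: A) _ _]mxE [(l2 *: B) _ _]mxE !RaddE !RmulE.
case: (Rle_lt_or_eq_dec _ _ h1) => H1.
  have := Rmult_lt_0_compat _ _ H1 q1.
  have := Rmult_le_pos _ _ h2 (Rlt_le _ _ q2).
  move=> hb ha; exact: Rplus_lt_le_0_compat ha hb.
have H2 : l2 = R1 by rewrite -H1 in hl; lra.
rewrite -H1 H2 Rmult_0_l Rmult_1_l Rplus_0_l; exact: q2.
Qed.

Local Close Scope ring_scope.
Local Open Scope R_scope.

Lemma hNoE d (X : 'M[R]_d) : 0 < (\det X)%R ->
  hNo X = / 2 * (INR d * ln (2 * PI) + INR d + ln ((\det X)%R)).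
Proof.
move=> hX; rewrite /hNo.
have h2 : 0 < 2 * PI by apply: Rmult_lt_0_compat; [lra | exact: PI_RGT_0].
rewrite ln_mult //; last by apply: pow_lt; apply: Rmult_lt_0_compat => //; exact: exp_pos.
rewrite ln_pow; last by apply: Rmult_lt_0_compat => //; exact: exp_pos.
rewrite ln_mult //; last exact: exp_pos.
rewrite ln_exp; ring.
Qed.

Lemma lnF2E d (X : 'M[R]_d) : 0 < (\det X)%R ->
  ln ((2 * PI) ^ d * (\det X)%R) = INR d * ln (2 * PI) + ln ((\det X)%R).
Proof.
move=> hX.
have h2 : 0 < 2 * PI by apply: Rmult_lt_0_compat; [lra | exact: PI_RGT_0].
rewrite ln_mult //; last exact: pow_lt.
by rewrite ln_pow.
Qed.

Theorem theorem2p1 (d : nat) (hd : (1 <= d)%N) (C1 C2 : 'M[R]_d) (l1 l2 : R)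
  (hC1 : sym_posdef C1) (hC2 : sym_posdef C2)
  (hl1 : 0 <= l1 <= 1) (hl2 : 0 <= l2 <= 1) (hl : l1 + l2 = 1)
  (t : 'cV[R]_d) (ht : setS l1 l2 C1 C2 t) :
  let C := (l1 *: C1 + l2 *: C2)%R in
  let LHS := hNo C * exp (/ 2 * qform C t)
             - l1 * hNo C1 * exp (/ 2 * qform C1 t)
             - l2 * hNo C2 * exp (/ 2 * qform C2 t) in
  0 <= LHS /\ (LHS = 0 <-> (l1 * l2 = 0 \/ C1 = C2)).
Proof.
move=> C LHS.
have [h1 h1'] := hl1; have [h2 h2'] := hl2.
have HC : sym_posdef C := comb_pd _ _ _ _ _ hC1 hC2 h1 h2 hl.
have [dC d1 P1 Q1] := pairKL _ _ _ HC hC1.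
have [_ d2 P2 Q2] := pairKL _ _ _ HC hC2.
have [T1 eT1] : exists T1 : R, (\tr (invmx C *m C1))%R = T1 by eexists.
have [T2 eT2] : exists T2 : R, (\tr (invmx C *m C2))%R = T2 by eexists.
rewrite eT1 in P1 Q1; rewrite eT2 in P2 Q2.
move: ht; rewrite /setS /F2 /F1 /= -/C lnF2E // eT1 eT2 => -[hF1 hF2].
have HE := exp_pos (/ 2 * qform C t).
have HE1 := exp_pos (/ 2 * qform C1 t).
have HE2 := exp_pos (/ 2 * qform C2 t).
have k1 : 0 <= l1 * exp (/ 2 * qform C1 t) *
   (T1 - INR d - (ln (\det C1)%R - ln (\det C)%R)).
  apply: Rmult_le_pos; [apply: Rmult_le_pos => //; lra | lra].
have k2 : 0 <= l2 * exp (/ 2 * qform C2 t) *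
   (T2 - INR d - (ln (\det C2)%R - ln (\det C)%R)).
  apply: Rmult_le_pos; [apply: Rmult_le_pos => //; lra | lra].
have Hid : 2 * LHS = - (((l1 * exp (/ 2 * qform C1 t) + l2 * exp (/ 2 * qform C2 t) - exp (/ 2 * qform C t)) *
       (INR d * ln (2 * PI) + ln (\det C)%R) +
       (l1 * exp (/ 2 * qform C1 t) * T1 + l2 * exp (/ 2 * qform C2 t) * T2) -
       INR d * exp (/ 2 * qform C t)))
   + l1 * exp (/ 2 * qform C1 t) * (T1 - INR d - (ln (\det C1)%R - ln (\det C)%R))
   + l2 * exp (/ 2 * qform C2 t) * (T2 - INR d - (ln (\det C2)%R - ln (\det C)%R)).
  rewrite /LHS !hNoE //.
field.
split; first lra.
split.
- move=> H0.
  case: (Req_dec l1 0) => [->|n1]; first by left; ring.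
  case: (Req_dec l2 0) => [->|n2]; first by left; ring.
  right.
  have z1 : l1 * exp (/ 2 * qform C1 t) * (T1 - INR d - (ln (\det C1)%R - ln (\det C)%R)) = 0 by lra.
  have z2 : l2 * exp (/ 2 * qform C2 t) * (T2 - INR d - (ln (\det C2)%R - ln (\det C)%R)) = 0 by lra.
  have e1 : C = C1.
    apply: Q1; case: (Rmult_integral _ _ z1) => [|H]; last lra.
    case/Rmult_integral => H; [by case: n1 | move: (HE1); rewrite H; lra].
  have e2 : C = C2.
    apply: Q2; case: (Rmult_integral _ _ z2) => [|H]; last lra.
    case/Rmult_integral => H; [by case: n2 | move: (HE2); rewrite H; lra].
  by rewrite -e1 -e2.
- case => [H|H].
  + case: (Rmult_integral _ _ H) => H'.
    * have e : C = C2.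
        rewrite /C H' (_ : l2 = 1); last lra.
        by rewrite GRing.scale0r GRing.add0r GRing.scale1r.
      rewrite /LHS e H' (_ : l2 = 1); last lra.
      ring.
    * have e : C = C1.
        rewrite /C H' (_ : l1 = 1); last lra.
        by rewrite GRing.scale0r GRing.addr0 GRing.scale1r.
      rewrite /LHS e H' (_ : l1 = 1); last lra.
      ring.
  + have e : C = C2.
      rewrite /C H -GRing.scalerDl (_ : (l1 + l2)%R = 1%R) ?GRing.scale1r //.
    rewrite /LHS e H.
    have -> : l2 = 1 - l1 by lra.
    ring.
Qed.
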